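(* Assume $\beta>1$ and $0<\omega_i^{\min}\le\omega_i^k\le\omega_i^{\max}<\infty$ ($i\le N-1$), $0<\nu_i^{\min}\le\nu_i^k\le\nu_i^{\max}<\infty$ ($i\le N-2$) for all $k\ge0$. Then the iterates of the 2-splitting proximal point ADMM are bounded: there exist constants $\mathcal{W}_i^{\max},\mathcal{V}_i^{\max},\lambda^{\max}>0$ such that $\|W_i^k\|_F\le\mathcal{W}_i^{\max}$, $\|V_i^k\|_F\le\mathcal{V}_i^{\max}$ ($i=1,\dots,N$) and $\|\Lambda^k\|_F\le\lambda^{\max}$ for all $k\ge0$.
   Context: Data $X\in\mathbb{R}^{d\times n}$, $Y\in\mathbb{R}^{q\times n}$, integer $N\ge3$, parameters $\lambda,\mu>0$, $\beta>0$. Activations $\sigma_i:\mathbb{R}\to\mathbb{R}$ ($i\le N-1$) real analytic with $|\sigma_i|\le\psi_0,|\sigma_i'|\le\psi_1,|\sigma_i''|\le\psi_2$ on $\mathbb{R}$, applied entrywise to matrices. $\|\cdot\|_F$ Frobenius norm, $\langle A,B\rangle=\mathrm{tr}(AB^T)$. $V_0:=X$ always. Variables $W_i\in\mathbb{R}^{d\times d}$ ($i\le N-1$), $W_N\in\mathbb{R}^{q\times d}$, $V_i\in\mathbb{R}^{d\times n}$ ($1\le i\le N-1$), $V_N,\Lambda\in\mathbb{R}^{q\times n}$. Augmented Lagrangian: $\mathcal{L}_\beta^{2s}(\{W_i\},\{V_i\},\Lambda)=\tfrac12\|V_N-Y\|_F^2+\tfrac\lambda2\sum_{i=1}^N\|W_i\|_F^2+\tfrac\mu2\sum_{i=1}^{N-1}\|V_{i-1}+\sigma_i(W_iV_{i-1})-V_i\|_F^2+\langle\Lambda,W_NV_{N-1}-V_N\rangle+\tfrac\beta2\|W_NV_{N-1}-V_N\|_F^2$.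 2-splitting proximal point ADMM: given arbitrary $W_i^0$, set $V_i^0=V_{i-1}^0+\sigma_i(W_i^0V_{i-1}^0)$ ($i\le N-1$), $V_N^0=W_N^0V_{N-1}^0$, $\Lambda^0=O$, and positive parameters $\omega_i^{k}$ ($i\le N-1$), $\nu_i^{k}$ ($i\le N-2$). For $k\ge1$: (a) $W_N^k=\arg\min_{W_N}\{\tfrac\lambda2\|W_N\|_F^2+\tfrac\beta2\|W_NV_{N-1}^{k-1}-V_N^{k-1}+\Lambda^{k-1}/\beta\|_F^2\}$; (b) for $i=N-1,\dots,1$: $W_i^k$ is a (fixed) minimizer of $\tfrac\lambda2\|W_i\|_F^2+\tfrac\mu2\|V_{i-1}^{k-1}+\sigma_i(W_iV_{i-1}^{k-1})-V_i^{k-1}\|_F^2+\tfrac{\omega_i^{k-1}}2\|W_i-W_i^{k-1}\|_F^2$; (c) for $i=1,\dots,N-2$: $V_i^k$ is a (fixed) minimizer of $\tfrac\mu2\|V_{i-1}^k+\sigma_i(W_i^kV_{i-1}^k)-V_i\|_F^2+\tfrac\mu2\|V_i+\sigma_{i+1}(W_{i+1}^kV_i)-V_{i+1}^{k-1}\|_F^2+\tfrac{\nu_i^{k-1}}2\|V_i-V_i^{k-1}\|_F^2$; (d) $V_{N-1}^k=\arg\min\{\tfrac\mu2\|V_{N-2}^k+\sigma_{N-1}(W_{N-1}^kV_{N-2}^k)-V_{N-1}\|_F^2+\tfrac\beta2\|W_N^kV_{N-1}-V_N^{k-1}+\Lambda^{k-1}/\beta\|_F^2\}$; (e) $V_N^k=\frac{1}{1+\beta}(Y+\beta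 W_N^kV_{N-1}^k+\Lambda^{k-1})$; (f) $\Lambda^k=\Lambda^{k-1}+\beta(W_N^kV_{N-1}^k-V_N^k)$. *)

(* Defs.v *)
From HB Require Import structures.
From mathcomp Require Import all_boot all_order all_algebra.
From mathcomp Require Import all_classical all_reals all_analysis.
Set Implicit Arguments. Unset Strict Implicit. Unset Printing Implicit Defensive.
Import Order.TTheory GRing.Theory Num.Theory.
Import numFieldNormedType.Exports.
Local Open Scope classical_set_scope.
Local Open Scope ring_scope.

Section Defs.
Variable R : realType.

Definition frob_inner (m p : nat) (A B : 'M[R]_(m, p)) : R :=
  \tr (A *m B^T).

Definition fnorm (m p : nat) (A : 'M[R]_(m, p)) : R :=
  Num.sqrt (\sum_(i < m) \sum_(j < p) A i j ^+ 2).

Definition act (m p : nat) (s : R -> R) (A : 'M[R]_(m, p)) : 'M[R]_(m, p) :=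
  map_mx s A.

Definition is_minimizer (T : Type) (f : T -> R) (x : T) : Prop :=
  forall y, f x <= f y.

Definition real_analytic (f : R -> R) : Prop :=
  forall x0 : R, exists2 r : R, 0 < r &
    exists a : nat -> R, forall x : R, `|x - x0| < r ->
      (fun m : nat => \sum_(k < m) a k * (x - x0) ^+ k) @ \oo --> f x.

End Defs.

(* Main.v *)
Require Import Defs.
From HB Require Import structures.
From mathcomp Require Import all_boot all_order all_algebra.
From mathcomp Require Import all_classical all_reals all_analysis.
From mathcomp Require Import ring lra zify.
Import Order.TTheory GRing.Theory Num.Theory.
Set Implicit Arguments. Unset Strict Implicit. Unset Printing Implicit Defensive.
Local Open Scope ring_scope.

Section Aux.
Variable R : realType.

Definition sq (m p : nat) (A : 'M[R]_(m, p)) : R := \sum_(i < m) \sum_(j < p) A i j ^+ 2.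

Lemma sq_ge0 m p (A : 'M[R]_(m, p)) : 0 <= sq A.
Proof. by apply: sumr_ge0 => i _; apply: sumr_ge0 => j _; apply: sqr_ge0. Qed.

Lemma fnorm2 m p (A : 'M[R]_(m, p)) : fnorm A ^+ 2 = sq A.
Proof. by rewrite /fnorm sqr_sqrtr // sq_ge0. Qed.

Lemma fnorm_ge0 m p (A : 'M[R]_(m, p)) : 0 <= fnorm A.
Proof. exact: sqrtr_ge0. Qed.

Lemma fnorm_le m p (A : 'M[R]_(m, p)) : fnorm A <= 1 + sq A.
Proof. rewrite -fnorm2. have := fnorm_ge0 A. nra. Qed.

Lemma sqZ m p c (A : 'M[R]_(m, p)) :
  c * sq A = \sum_(i < m) \sum_(j < p) (c * A i j ^+ 2).
Proof. rewrite /sq mulr_sumr; apply: eq_bigr => i _; by rewrite mulr_sumr. Qed.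

Lemma sum2D m p (F G : 'I_m -> 'I_p -> R) :
  \sum_(i < m) \sum_(j < p) F i j + \sum_(i < m) \sum_(j < p) G i j =
  \sum_(i < m) \sum_(j < p) (F i j + G i j).
Proof. rewrite -big_split; apply: eq_bigr => i _; by rewrite -big_split. Qed.

Lemma sum2_le m p (F G : 'I_m -> 'I_p -> R) :
  (forall i j, F i j <= G i j) ->
  \sum_(i < m) \sum_(j < p) F i j <= \sum_(i < m) \sum_(j < p) G i j.
Proof. move=> H; apply: ler_sum => i _; apply: ler_sum => j _; exact: H. Qed.

Lemma sum2_eq m p (F G : 'I_m -> 'I_p -> R) :
  (forall i j, F i j = G i j) ->
  \sum_(i < m) \sum_(j < p) F i j = \sum_(i < m) \sum_(j < p) G i j.
Proof. move=> H; apply: eq_bigr => i _; apply: eq_bigr => j _; exact: H. Qed.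

Lemma vn_scalar (beta v y p : R) : 1 < beta ->
  1 / 2 * ((1 + beta)^-1 * (y + beta * p + (v - y)) - y) ^+ 2 +
   beta / 2 *
   (p - (1 + beta)^-1 * (y + beta * p + (v - y)) +
    beta^-1 * (v - y + beta * (p - (1 + beta)^-1 * (y + beta * p + (v - y)))))
   ^+ 2 +
   - (1 / (2 * beta)) *
   (v - y + beta * (p - (1 + beta)^-1 * (y + beta * p + (v - y)))) ^+ 2
  <= 1 / 2 * (v - y) ^+ 2 + beta / 2 * (p - v + beta^-1 * (v - y)) ^+ 2 +
  - (1 / (2 * beta)) * (v - y) ^+ 2.
Proof.
move=> hb.
have hb0 : beta != 0 by apply/eqP; lra.
have hb1 : 1 + beta != 0 by apply/eqP; lra.
have k : 0 <= (p - v) ^+ 2 * beta * (beta - 1) * (beta + 2) / (2 * (1 + beta) ^+ 2).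
  apply: divr_ge0; last by nra.
  apply: mulr_ge0; last by lra.
  apply: mulr_ge0; last by lra.
  apply: mulr_ge0; [exact: sqr_ge0 | lra].
rewrite -subr_ge0; apply: (le_trans k); rewrite le_eqVlt; apply/orP; left; apply/eqP.
field.
by rewrite hb0 hb1.
Qed.

Lemma vn_step (q n : nat) (beta : R) (P VN0 Y L0 VN1 L1 : 'M[R]_(q, n)) :
  1 < beta -> L0 = VN0 - Y ->
  VN1 = (1 + beta)^-1 *: (Y + beta *: P + L0) ->
  L1 = L0 + beta *: (P - VN1) ->
  1/2 * sq (VN1 - Y) + beta/2 * sq (P - VN1 + beta^-1 *: L1) + (-(1/(2*beta))) * sq L1
  <= 1/2 * sq (VN0 - Y) + beta/2 * sq (P - VN0 + beta^-1 *: L0) + (-(1/(2*beta))) * sq L0.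
Proof.
move=> hb -> -> ->.
rewrite !sqZ !sum2D; apply: sum2_le => i j; rewrite !mxE.
exact: vn_scalar.
Qed.

Lemma lb_id (q n : nat) (beta : R) (P VN Y L : 'M[R]_(q, n)) :
  1 < beta -> L = VN - Y ->
  1/2 * sq (VN - Y) + beta/2 * sq (P - VN + beta^-1 *: L) + (-(1/(2*beta))) * sq L
  = 1/2 * sq (P - Y) + (beta - 1)/2 * sq (P - VN).
Proof.
move=> hb ->.
have hb0 : beta != 0 by apply/eqP; lra.
rewrite !sqZ !sum2D; apply: sum2_eq => i j; rewrite !mxE.
field. by [].
Qed.

Lemma sq3 m p (A B C : 'M[R]_(m, p)) : sq (A + B - C) <= 3 * (sq A + sq B + sq C).
Proof.
rewrite !mulrDr !sqZ !sum2D /sq; apply: sum2_le => i j; rewrite !mxE.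
move: (A i j) (B i j) (C i j) => a b c.
have := sqr_ge0 (a - b); have := sqr_ge0 (a + c); have := sqr_ge0 (b + c). nra.
Qed.

Lemma sq2 m p (A B : 'M[R]_(m, p)) : sq (A - B) <= 2 * (sq A + sq B).
Proof.
rewrite !mulrDr !sqZ !sum2D /sq; apply: sum2_le => i j; rewrite !mxE.
move: (A i j) (B i j) => a b.
have := sqr_ge0 (a + b). nra.
Qed.

Lemma sq_act m p (s : R -> R) (psi0 : R) (A : 'M[R]_(m, p)) :
  (forall x, `|s x| <= psi0) -> sq (act s A) <= \sum_(i < m) \sum_(j < p) psi0 ^+ 2.
Proof.
move=> H; apply: sum2_le => i j; rewrite !mxE.
have := H (A i j); move: (s (A i j)) => x; rewrite ler_norml => /andP[h1 h2]. nra.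
Qed.

End Aux.

Section Lyap.
Variables (R : realType) (d q n M : nat) (Y : 'M[R]_(q, n)) (lam mu beta : R)
  (sig : nat -> R -> R).

Definition rr (W : nat -> 'M[R]_(d, d)) (V : nat -> 'M[R]_(d, n)) (j : nat) : 'M[R]_(d, n) :=
  V j.-1 + act (sig j) (W j *m V j.-1) - V j.

Definition Lf (W : nat -> 'M[R]_(d, d)) (WN : 'M[R]_(q, d)) (V : nat -> 'M[R]_(d, n))
  (VN Lm : 'M[R]_(q, n)) : R :=
  1/2 * sq (VN - Y) + \sum_(1 <= j < M.+3) (lam/2 * sq (W j) + mu/2 * sq (rr W V j))
  + lam/2 * sq WN + beta/2 * sq (WN *m V M.+2 - VN + beta^-1 *: Lm)
  + (-(1/(2*beta))) * sq Lm.

Lemma sum_split2 (F : nat -> R) t : (t.+2 < M.+3)%N ->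
  \sum_(1 <= j < M.+3) F j =
  \sum_(1 <= j < t.+1) F j + F t.+1 + F t.+2 + \sum_(t.+3 <= j < M.+3) F j.
Proof.
move=> ht.
rewrite (@big_cat_nat _ _ _ t.+1) //; last by lia.
rewrite (@big_ltn _ _ _ t.+1); last by lia.
rewrite (@big_ltn _ _ _ t.+2) //.
rewrite /=; lra.
Qed.

Lemma sum_term_le (F : nat -> R) a b j : (forall i, 0 <= F i) -> (a <= j < b)%N ->
  F j <= \sum_(a <= i < b) F i.
Proof.
move=> H /andP[h1 h2].
rewrite (@big_cat_nat _ _ _ j) //; last by lia.
rewrite (@big_ltn _ _ _ j) //.
have := @sumr_ge0 R _ (index_iota a j) (fun _ => true) F (fun i _ => H i).
have := @sumr_ge0 R _ (index_iota j.+1 b) (fun _ => true) F (fun i _ => H i).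
rewrite /=; lra.
Qed.

Lemma Lf_ext W WN V V' VN Lm : (forall j, (j < M.+3)%N -> V' j = V j) ->
  Lf W WN V' VN Lm = Lf W WN V VN Lm.
Proof.
move=> H; rewrite /Lf (H M.+2) //.
have E1 : \sum_(1 <= j < M.+3) (lam / 2 * sq (W j) + mu / 2 * sq (rr W V' j))
   = \sum_(1 <= j < M.+3) (lam / 2 * sq (W j) + mu / 2 * sq (rr W V j)).
  apply: eq_big_nat => j /andP[h1 h2].
  rewrite /rr !H //.
  by apply: leq_ltn_trans (leq_pred j) h2.
by rewrite E1.
Qed.

Lemma Lf_change2 W WN V V' VN Lm t : (t.+2 < M.+3)%N ->
  (forall j, j != t.+1 -> V' j = V j) ->
  mu/2 * sq (rr W V' t.+1) + mu/2 * sq (rr W V' t.+2)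
    <= mu/2 * sq (rr W V t.+1) + mu/2 * sq (rr W V t.+2) ->
  Lf W WN V' VN Lm <= Lf W WN V VN Lm.
Proof.
move=> ht H Hle.
rewrite /Lf !(sum_split2 _ ht).
have E1 : \sum_(1 <= j < t.+1) (lam / 2 * sq (W j) + mu / 2 * sq (rr W V' j))
   = \sum_(1 <= j < t.+1) (lam / 2 * sq (W j) + mu / 2 * sq (rr W V j)).
  apply: eq_big_nat => j /andP[h1 h2].
  rewrite /rr !H //; lia.
have E2 : \sum_(t.+3 <= j < M.+3) (lam / 2 * sq (W j) + mu / 2 * sq (rr W V' j))
   = \sum_(t.+3 <= j < M.+3) (lam / 2 * sq (W j) + mu / 2 * sq (rr W V j)).
  apply: eq_big_nat => j /andP[h1 h2].
  rewrite /rr !H //; lia.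
have E3 : V' M.+2 = V M.+2 by apply: H; lia.
rewrite E1 E2 E3. lra.
Qed.

Lemma Lf_changeLast W WN V V' VN Lm :
  (forall j, j != M.+2 -> V' j = V j) ->
  mu/2 * sq (rr W V' M.+2) + beta/2 * sq (WN *m V' M.+2 - VN + beta^-1 *: Lm)
    <= mu/2 * sq (rr W V M.+2) + beta/2 * sq (WN *m V M.+2 - VN + beta^-1 *: Lm) ->
  Lf W WN V' VN Lm <= Lf W WN V VN Lm.
Proof.
move=> H Hle.
rewrite /Lf !(@big_nat_recr _ _ _ M.+2) //.
have E1 : \sum_(1 <= j < M.+2) (lam / 2 * sq (W j) + mu / 2 * sq (rr W V' j))
   = \sum_(1 <= j < M.+2) (lam / 2 * sq (W j) + mu / 2 * sq (rr W V j)).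
  apply: eq_big_nat => j /andP[h1 h2].
  rewrite /rr !H //; lia.
rewrite E1 /=. lra.
Qed.

Lemma Lf_WN W WN WN' V VN Lm :
  lam/2 * sq WN' + beta/2 * sq (WN' *m V M.+2 - VN + beta^-1 *: Lm)
    <= lam/2 * sq WN + beta/2 * sq (WN *m V M.+2 - VN + beta^-1 *: Lm) ->
  Lf W WN' V VN Lm <= Lf W WN V VN Lm.
Proof. rewrite /Lf. lra. Qed.

Lemma Lf_W W W' WN V VN Lm :
  (forall j, (1 <= j < M.+3)%N ->
     lam/2 * sq (W' j) + mu/2 * sq (rr W' V j) <= lam/2 * sq (W j) + mu/2 * sq (rr W V j)) ->
  Lf W' WN V VN Lm <= Lf W WN V VN Lm.
Proof. move=> H; rewrite /Lf. have := ler_sum_nat H. lra. Qed.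

Lemma Lf_VN W WN V VN0 L0 VN1 L1 :
  1 < beta -> L0 = VN0 - Y ->
  VN1 = (1 + beta)^-1 *: (Y + beta *: (WN *m V M.+2) + L0) ->
  L1 = L0 + beta *: (WN *m V M.+2 - VN1) ->
  Lf W WN V VN1 L1 <= Lf W WN V VN0 L0.
Proof.
move=> hb h0 h1 h2; have := vn_step hb h0 h1 h2. rewrite /Lf. lra.
Qed.

Lemma Lf_lb W WN V VN Lm : 0 < lam -> 0 < mu -> 1 < beta -> Lm = VN - Y ->
  (forall j, (1 <= j < M.+3)%N ->
     lam/2 * sq (W j) <= Lf W WN V VN Lm /\ mu/2 * sq (rr W V j) <= Lf W WN V VN Lm)
  /\ lam/2 * sq WN <= Lf W WN V VN Lm
  /\ 1/2 * sq (WN *m V M.+2 - Y) <= Lf W WN V VN Lm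
  /\ (beta - 1)/2 * sq (WN *m V M.+2 - VN) <= Lf W WN V VN Lm.
Proof.
move=> hl hm hb hL.
have E := lb_id (WN *m V M.+2) hb hL.
have F0 : forall j, 0 <= lam / 2 * sq (W j) + mu / 2 * sq (rr W V j).
  move=> j; apply: addr_ge0; apply: mulr_ge0; try exact: sq_ge0; lra.
have S0 := @sumr_ge0 R _ (index_iota 1 M.+3) (fun _ => true) _ (fun i _ => F0 i).
have h1 : 0 <= lam / 2 * sq WN by apply: mulr_ge0; [lra | exact: sq_ge0].
have h2 : 0 <= 1/2 * sq (WN *m V M.+2 - Y) by apply: mulr_ge0; [lra | exact: sq_ge0].
have h3 : 0 <= (beta - 1)/2 * sq (WN *m V M.+2 - VN) by apply: mulr_ge0; [lra | exact: sq_ge0].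
split; last by rewrite /Lf; lra.
move=> j hj.
have T := sum_term_le F0 hj.
have a1 : 0 <= lam / 2 * sq (W j) by apply: mulr_ge0; [lra | exact: sq_ge0].
have a2 : 0 <= mu / 2 * sq (rr W V j) by apply: mulr_ge0; [lra | exact: sq_ge0].
rewrite /Lf; split; lra.
Qed.

End Lyap.

Fixpoint Vb (R : realType) (b0 c : R) (i : nat) : R :=
  match i with 0%N => b0 | i'.+1 => 3 * (Vb b0 c i' + c) end.

Lemma Vb_ge0 (R : realType) (b0 c : R) i : 0 <= b0 -> 0 <= c -> 0 <= Vb b0 c i.
Proof. move=> h0 h1; elim: i => //= i IH; apply: mulr_ge0 => //; lra. Qed.

Lemma sq0 (R : realType) m p : sq (0 : 'M[R]_(m, p)) = 0.
Proof. by rewrite /sq big1 // => i _; rewrite big1 // => j _; rewrite mxE expr0n. Qed.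

Lemma div_bound (R : realType) (a s C : R) : 0 < a -> a / 2 * s <= C -> s <= 2 * C / a.
Proof. move=> ha h; rewrite ler_pdivlMr //; lra. Qed.

Theorem mainTheorem5 (R : realType) (d q n N : nat)
  (X : 'M[R]_(d, n)) (Y : 'M[R]_(q, n))
  (lam mu beta psi0 psi1 psi2 : R)
  (sig : nat -> R -> R)
  (om nu : nat -> nat -> R) (om_min om_max nu_min nu_max : nat -> R)
  (W : nat -> nat -> 'M[R]_(d, d)) (WN : nat -> 'M[R]_(q, d))
  (V : nat -> nat -> 'M[R]_(d, n)) (VN : nat -> 'M[R]_(q, n))
  (L : nat -> 'M[R]_(q, n)) :
  (3 <= N)%N ->
  0 < lam -> 0 < mu -> 1 < beta ->
  (* activations *)
  (forall i, (1 <= i <= N.-1)%N ->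
     [/\ real_analytic (sig i),
         forall x, `|sig i x| <= psi0,
         forall x, `|derive1 (sig i) x| <= psi1 &
         forall x, `|derive1n 2 (sig i) x| <= psi2]) ->
  (* proximal parameters *)
  (forall i, (1 <= i <= N.-1)%N ->
     0 < om_min i /\ forall k, om_min i <= om k i <= om_max i) ->
  (forall i, (1 <= i <= N.-2)%N ->
     0 < nu_min i /\ forall k, nu_min i <= nu k i <= nu_max i) ->
  (* V_0 := X *)
  (forall k, V k 0%N = X) ->
  (* initialization *)
  (forall i, (1 <= i <= N.-1)%N ->
     V 0%N i = V 0%N i.-1 + act (sig i) (W 0%N i *m V 0%N i.-1)) ->
  VN 0%N = WN 0%N *m V 0%N N.-1 ->
  L 0%N = 0 ->
  (* iterations, k >= 1 *)
  (forall k, (1 <= k)%N ->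
   [/\
    (* (a) *)
    is_minimizer (fun Wn : 'M[R]_(q, d) =>
        lam / 2 * fnorm Wn ^+ 2
        + beta / 2 * fnorm (Wn *m V k.-1 N.-1 - VN k.-1 + beta^-1 *: L k.-1) ^+ 2)
      (WN k),
    (* (b) *)
    (forall i, (1 <= i <= N.-1)%N ->
      is_minimizer (fun Wi : 'M[R]_(d, d) =>
          lam / 2 * fnorm Wi ^+ 2
          + mu / 2 * fnorm (V k.-1 i.-1 + act (sig i) (Wi *m V k.-1 i.-1) - V k.-1 i) ^+ 2
          + om k.-1 i / 2 * fnorm (Wi - W k.-1 i) ^+ 2)
        (W k i)),
    (* (c) *)
    (forall i, (1 <= i <= N.-2)%N ->
      is_minimizer (fun Vi : 'M[R]_(d, n) =>
          mu / 2 * fnorm (V k i.-1 + act (sig i) (W k i *m V k i.-1) - Vi) ^+ 2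
          + mu / 2 * fnorm (Vi + act (sig i.+1) (W k i.+1 *m Vi) - V k.-1 i.+1) ^+ 2
          + nu k.-1 i / 2 * fnorm (Vi - V k.-1 i) ^+ 2)
        (V k i)),
    (* (d) *)
    is_minimizer (fun Vi : 'M[R]_(d, n) =>
        mu / 2 * fnorm (V k N.-2 + act (sig N.-1) (W k N.-1 *m V k N.-2) - Vi) ^+ 2
        + beta / 2 * fnorm (WN k *m Vi - VN k.-1 + beta^-1 *: L k.-1) ^+ 2)
      (V k N.-1) &
    (* (e) and (f) *)
    (VN k = (1 + beta)^-1 *: (Y + beta *: (WN k *m V k N.-1) + L k.-1) /\
     L k = L k.-1 + beta *: (WN k *m V k N.-1 - VN k))]) ->
  (* conclusion: boundedness of all iterates *)
  exists (Wmax Vmax : nat -> R) (lmax : R),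
    [/\ (forall i, (1 <= i <= N)%N -> 0 < Wmax i /\ 0 < Vmax i),
        0 < lmax &
        forall k : nat,
          [/\ (forall i, (1 <= i <= N.-1)%N ->
                 fnorm (W k i) <= Wmax i /\ fnorm (V k i) <= Vmax i),
              fnorm (WN k) <= Wmax N,
              fnorm (VN k) <= Vmax N &
              fnorm (L k) <= lmax]].
Proof.
case: N => [|[|[|M]]] //.
move=> _ hl hm hb hsig hom hnu hV0 hinit hVN0 hL0 hit.
have hb0 : beta != 0 by apply/eqP; lra.
have hb1 : 1 + beta != 0 by apply/eqP; lra.
have hLam : forall k, (1 <= k)%N -> L k = VN k - Y.
  move=> k hk; have [_ _ _ _ [he hf]] := hit k hk.
  rewrite hf he; apply/matrixP => i j; rewrite !mxE.
  field. by [].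
pose Lk k := Lf M Y lam mu beta sig (W k) (WN k) (V k) (VN k) (L k).
have desc : forall k, (1 <= k)%N -> Lk k.+1 <= Lk k.
  move=> k hk.
  have [ha hbb hc hd [he hf]] := hit k.+1 isT.
  pose s1 := Lf M Y lam mu beta sig (W k) (WN k.+1) (V k) (VN k) (L k).
  pose s2 := Lf M Y lam mu beta sig (W k.+1) (WN k.+1) (V k) (VN k) (L k).
  pose Vm t := fun j => if (j <= t)%N then V k.+1 j else V k j.
  pose s4 := Lf M Y lam mu beta sig (W k.+1) (WN k.+1) (V k.+1) (VN k) (L k).
  have e1 : s1 <= Lk k.
    apply: Lf_WN; have := ha (WN k); rewrite !fnorm2; exact.
  have e2 : s2 <= s1.
    apply: Lf_W => j hj.
    have hj' : (1 <= j <= M.+2)%N by lia.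
    have := hbb j hj' (W k j); rewrite !fnorm2 subrr sq0 /rr /=.
    have [h0 h1] := hom j hj'.
    have := h1 k; move=> /andP[h2 _].
    have := sq_ge0 (W k.+1 j - W k j).
    set a := sq (W k.+1 j - W k j).
    move=> ha0 H.
    have : 0 <= om k j / 2 * a by apply: mulr_ge0 => //; lra.
    lra.
  have Vm1 : forall t j, (j <= t)%N -> Vm t j = V k.+1 j by move=> t' j h; rewrite /Vm h.
  have Vm2 : forall t j, (t < j)%N -> Vm t j = V k j by move=> t' j h; rewrite /Vm leqNgt h.
  have Vm_eq : forall t j, j != t.+1 -> Vm t.+1 j = Vm t j.
    move=> t j hj; rewrite /Vm leq_eqVlt ltnS (negbTE hj) //.
  have e3 : forall t, (t <= M.+1)%N ->
      Lf M Y lam mu beta sig (W k.+1) (WN k.+1) (Vm t) (VN k) (L k) <= s2.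
    elim => [_|t IH ht].
      rewrite /s2 le_eqVlt; apply/orP; left; apply/eqP.
      apply: Lf_ext => j _.
      rewrite /Vm; case: j => //=; by rewrite !hV0.
    apply: le_trans (IH (ltnW ht)).
    apply: (@Lf_change2 _ _ _ _ M Y lam mu beta sig _ _ _ _ _ _ t); first by lia.
      exact: Vm_eq.
    have ht' : (1 <= t.+1 <= M.+1)%N by lia.
    have := hc t.+1 ht' (V k t.+1); rewrite !fnorm2 subrr sq0.
    rewrite /rr /= (Vm1 t.+1 t) // (Vm1 t.+1 t.+1) // (Vm2 t.+1 t.+2) // (Vm1 t t) //.
    rewrite (Vm2 t t.+1) // (Vm2 t t.+2) //.
    have [h0 h1] := hnu t.+1 ht'.
    have := h1 k; move=> /andP[h2 _].
    have := sq_ge0 (V k.+1 t.+1 - V k t.+1).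
    set a := sq (V k.+1 t.+1 - V k t.+1).
    move=> ha0 H.
    have : 0 <= nu k t.+1 / 2 * a by apply: mulr_ge0 => //; lra.
    lra.
  have e4 : s4 <= s2.
    apply: le_trans (e3 M.+1 (leqnn _)).
    have E : s4 = Lf M Y lam mu beta sig (W k.+1) (WN k.+1) (Vm M.+2) (VN k) (L k).
      apply: Lf_ext => j hj; rewrite /Vm; have -> : (j <= M.+2)%N by lia.
      by [].
    rewrite E.
    apply: Lf_changeLast; first exact: Vm_eq.
    have := hd (V k M.+2); rewrite !fnorm2.
    rewrite /rr /= (Vm1 M.+2 M.+1) // (Vm1 M.+2 M.+2) // (Vm1 M.+1 M.+1) // (Vm2 M.+1 M.+2) //.
  have e5 : Lk k.+1 <= s4.
    apply: Lf_VN => //; first exact: hLam.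
  lra.
have bound1 : forall k, (1 <= k)%N -> Lk k <= Lk 1%N.
  elim => // k IH hk.
  case: k IH hk => // k IH _.
  apply: le_trans (desc k.+1 isT) _; exact: IH.
set C := `|Lk 1%N|.
have C0 : 0 <= C by exact: normr_ge0.
have LkC : forall k, (1 <= k)%N -> Lf M Y lam mu beta sig (W k) (WN k) (V k) (VN k) (L k) <= C.
  move=> k hk; have := le_trans (bound1 k hk) (ler_norm _); rewrite /Lk; exact.
have hlam2 : 0 <= 2 * C / lam by apply: divr_ge0; lra.
have hmu2 : 0 <= 2 * C / mu by apply: divr_ge0; lra.
have hbe2 : 0 <= 2 * C / (beta - 1) by apply: divr_ge0; lra.
have h12 : 0 <= 2 * C / 1 by apply: divr_ge0; lra.
pose Ks := \sum_(i < d) \sum_(j < n) psi0 ^+ 2.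
have Ks0 : 0 <= Ks by apply: sumr_ge0 => i _; apply: sumr_ge0 => j _; exact: sqr_ge0.
have BW : forall k i, (1 <= k)%N -> (1 <= i <= M.+2)%N -> sq (W k i) <= 2 * C / lam.
  move=> k i hk hi.
  have [H _] := Lf_lb M sig (W k) (WN k) (V k) hl hm hb (hLam k hk).
  have [H1 _] := H i hi.
  apply: div_bound hl _; apply: le_trans H1 (LkC k hk).
have Br : forall k i, (1 <= k)%N -> (1 <= i <= M.+2)%N ->
    sq (rr sig (W k) (V k) i) <= 2 * C / mu.
  move=> k i hk hi.
  have [H _] := Lf_lb M sig (W k) (WN k) (V k) hl hm hb (hLam k hk).
  have [_ H1] := H i hi.
  apply: div_bound hm _; apply: le_trans H1 (LkC k hk).
have BWN : forall k, (1 <= k)%N -> sq (WN k) <= 2 * C / lam.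
  move=> k hk.
  have [_ [H1 _]] := Lf_lb M sig (W k) (WN k) (V k) hl hm hb (hLam k hk).
  apply: div_bound hl _; apply: le_trans H1 (LkC k hk).
have BPY : forall k, (1 <= k)%N -> sq (WN k *m V k M.+2 - Y) <= 2 * C / 1.
  move=> k hk.
  have [_ [_ [H1 _]]] := Lf_lb M sig (W k) (WN k) (V k) hl hm hb (hLam k hk).
  apply: div_bound ltr01 _; apply: le_trans H1 (LkC k hk).
have BPZ : forall k, (1 <= k)%N -> sq (WN k *m V k M.+2 - VN k) <= 2 * C / (beta - 1).
  move=> k hk.
  have [_ [_ [_ H1]]] := Lf_lb M sig (W k) (WN k) (V k) hl hm hb (hLam k hk).
  have hb' : 0 < beta - 1 by lra.
  apply: div_bound hb' _; apply: le_trans H1 (LkC k hk).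
have BV : forall k, (1 <= k)%N -> forall i, (i <= M.+2)%N ->
    sq (V k i) <= Vb (sq X) (Ks + 2 * C / mu) i.
  move=> k hk; elim => [_|i IH hi] /=.
    by rewrite hV0.
  have E : V k i.+1 = V k i + act (sig i.+1) (W k i.+1 *m V k i) - rr sig (W k) (V k) i.+1.
    by rewrite /rr /= opprB addrC subrK.
  rewrite E; apply: le_trans (sq3 _ _ _) _.
  have := IH (ltnW hi).
  have := Br k i.+1 hk hi.
  have [_ hs _ _] := hsig i.+1 hi.
  have := sq_act (W k i.+1 *m V k i) hs.
  rewrite -/Ks. lra.
have BVN : forall k, (1 <= k)%N -> sq (VN k) <= 3 * (sq Y + 2 * C / 1 + 2 * C / (beta - 1)).
  move=> k hk.
  have E : VN k = Y + (WN k *m V k M.+2 - Y) - (WN k *m V k M.+2 - VN k).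
    by apply/matrixP => a b; rewrite !mxE; lra.
  rewrite E; apply: le_trans (sq3 _ _ _) _.
  have := BPY k hk; have := BPZ k hk. lra.
have BL : forall k, (1 <= k)%N -> sq (L k) <= 2 * (2 * C / 1 + 2 * C / (beta - 1)).
  move=> k hk.
  have E : L k = (WN k *m V k M.+2 - Y) - (WN k *m V k M.+2 - VN k).
    by rewrite (hLam k hk); apply/matrixP => a b; rewrite !mxE; lra.
  rewrite E; apply: le_trans (sq2 _ _) _.
  have := BPY k hk; have := BPZ k hk. lra.
have sqY0 := sq_ge0 Y.
have sqX0 := sq_ge0 X.
have Vb0 : forall i, 0 <= Vb (sq X) (Ks + 2 * C / mu) i.
  move=> i; apply: Vb_ge0 => //; lra.
exists (fun i => 1 + 2 * C / lam + fnorm (W 0%N i) + fnorm (WN 0%N)),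
  (fun i => 1 + Vb (sq X) (Ks + 2 * C / mu) i + fnorm (V 0%N i)
     + 3 * (sq Y + 2 * C / 1 + 2 * C / (beta - 1)) + fnorm (VN 0%N)),
  (1 + 2 * (2 * C / 1 + 2 * C / (beta - 1)) + fnorm (L 0%N)).
split.
- move=> i _; have := fnorm_ge0 (W 0%N i); have := fnorm_ge0 (WN 0%N).
  have := fnorm_ge0 (V 0%N i); have := fnorm_ge0 (VN 0%N); have := Vb0 i.
  split; lra.
- have := fnorm_ge0 (L 0%N); lra.
case => [|k].
  split.
  + move=> i _; have := fnorm_ge0 (W 0%N i); have := fnorm_ge0 (WN 0%N).
    have := fnorm_ge0 (V 0%N i); have := fnorm_ge0 (VN 0%N); have := Vb0 i.
    split; lra.
  + have := fnorm_ge0 (W 0%N M.+3); lra.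
  + have := fnorm_ge0 (V 0%N M.+3); have := Vb0 M.+3; lra.
  + lra.
have hk : (1 <= k.+1)%N by [].
split.
- move=> i hi; split.
  + apply: le_trans (fnorm_le _) _.
    have := BW k.+1 i hk hi.
    have := fnorm_ge0 (W 0%N i); have := fnorm_ge0 (WN 0%N). lra.
  + apply: le_trans (fnorm_le _) _.
    have := BV k.+1 hk i (andP hi).2.
    have := fnorm_ge0 (V 0%N i); have := fnorm_ge0 (VN 0%N). lra.
- apply: le_trans (fnorm_le _) _.
  have := BWN k.+1 hk.
  have := fnorm_ge0 (W 0%N M.+3); have := fnorm_ge0 (WN 0%N). lra.
- apply: le_trans (fnorm_le _) _.
  have := BVN k.+1 hk; have := Vb0 M.+3.
  have := fnorm_ge0 (V 0%N M.+3); have := fnorm_ge0 (VN 0%N). lra.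
- apply: le_trans (fnorm_le _) _.
  have := BL k.+1 hk; have := fnorm_ge0 (L 0%N). lra.
Qed.
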